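(* Let $F$ be a field, $A$ a finitely generated free abelian group, $F * A$ a twisted group algebra, and $A'<A$ a subgroup of finite index in $A$. Then $\dim(F * A')=\dim(F * A)$.
   Context: A twisted group algebra $F * A$ is an $F$-algebra with $F$-basis $\{\bar a: a\in A\}$ and $\bar a_1\bar a_2=\tau(a_1,a_2)\overline{a_1a_2}$, $\tau$ a 2-cocycle with values in $F\setminus\{0\}$; $F * A'$ is the subalgebra spanned by $\bar a$, $a\in A'$. $\dim$ denotes the Krull dimension, which for these algebras coincides with the global dimension. *)

(* Defs.v *)
From HB Require Import structures.
From mathcomp Require Import all_boot all_order all_algebra.
Set Implicit Arguments. Unset Strict Implicit. Unset Printing Implicit Defensive.
Import GRing.Theory.
Local Open Scope ring_scope.

(* The free abelian group Z^n, written additively. *)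
Notation FA n := ('rV[int]_n).

Section TwistedGroupAlgebra.
Variables (F : fieldType) (R : algType F) (n : nat) (u : FA n -> R).

Definition tga_span (S : FA n -> Prop) (x : R) : Prop :=
  exists (s : seq (FA n)) (c : FA n -> F),
    (forall a, a \in s -> S a) /\ x = \sum_(a <- s) c a *: u a.

Definition tga_basis : Prop :=
  (forall (s : seq (FA n)) (c : FA n -> F), uniq s ->
      \sum_(a <- s) c a *: u a = 0 -> forall a, a \in s -> c a = 0)
  /\ (forall x, tga_span (fun _ => True) x).

(* R = F * A with basis u and twisting 2-cocycle tau:
   u a1 * u a2 = tau(a1,a2) u (a1 a2) (group law written additively). *)
Definition twisted_group_algebra (tau : FA n -> FA n -> F) : Prop :=
  [/\ forall a b, tau a b != 0,
      forall a b c, tau a b * tau (a + b) c = tau a (b + c) * tau b c,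
      tga_basis
    & forall a b, u a * u b = tau a b *: u (a + b)].
End TwistedGroupAlgebra.

Section Subgroups.
Variable n : nat.
Definition is_subgroup (B : FA n -> Prop) : Prop :=
  B 0 /\ (forall a b, B a -> B b -> B (a - b)).
Definition finite_index (B : FA n -> Prop) : Prop :=
  exists s : seq (FA n), forall a, exists2 r, r \in s & B (a - r).
End Subgroups.

(* Right Krull (Gabriel--Rentschler) dimension of a subring S of a ring R,
   given as a subset S : R -> Prop; right ideals of S are subsets of S. *)
Section Krull.
Variable (R : nzRingType) (S : R -> Prop).

Definition subset_of (I J : R -> Prop) := forall x, I x -> J x.

Definition is_rideal (I : R -> Prop) : Prop :=
  [/\ subset_of I S, I 0,
      forall x y, I x -> I y -> I (x + y)
    & forall x y, I x -> S y -> I (x * y)].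

(* dev_le k I J : the interval [I, J] of the lattice of right ideals of S
   has deviation <= k, i.e. every descending chain J >= c0 >= c1 >= ... >= I
   of right ideals has all but finitely many factors [c (i+1), c i] of
   deviation < k (deviation -oo meaning the factor is trivial). *)
Fixpoint dev_le (k : nat) (I J : R -> Prop) : Prop :=
  forall c : nat -> (R -> Prop),
    (forall i, is_rideal (c i)) ->
    (forall i, subset_of (c i.+1) (c i)) ->
    (forall i, subset_of I (c i) /\ subset_of (c i) J) ->
    exists N, forall i, (N <= i)%N ->
      if k is k'.+1 then dev_le k' (c i.+1) (c i)
      else subset_of (c i) (c i.+1).

Definition rKdim_le (k : nat) : Prop := dev_le k (fun x => x = 0) S.
End Krull.

(* Main.v *)
Require Import Defs.
From mathcomp Require Import all_boot all_order all_algebra.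
From Stdlib Require Import ClassicalEpsilon.
Set Implicit Arguments. Unset Strict Implicit. Unset Printing Implicit Defensive.
Import GRing.Theory.
Local Open Scope ring_scope.


Section Dev.
Variable R : nzRingType.
Definition sub (I J : R -> Prop) := forall x, I x -> J x.

Fixpoint devP (P : (R -> Prop) -> Prop) (k : nat) (I J : R -> Prop) : Prop :=
  forall c : nat -> (R -> Prop),
    (forall i, P (c i)) ->
    (forall i, sub (c i.+1) (c i)) ->
    (forall i, sub I (c i) /\ sub (c i) J) ->
    exists N, forall i, (N <= i)%N ->
      if k is k'.+1 then devP P k' (c i.+1) (c i)
      else sub (c i) (c i.+1).

Lemma dev_leE S k I J : dev_le S k I J <-> devP (is_rideal S) k I J.
Proof.
elim: k I J => [|k IH] I J /=; first by split.
split=> H c h1 h2 h3; have [N HN] := H c h1 h2 h3; exists N => i hi;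
  by apply/IH; apply: HN.
Qed.

Lemma dev_sub P k I J I' J' : devP P k I J -> sub I I' -> sub J' J -> devP P k I' J'.
Proof.
move=> H s1 s2.
have B (c : nat -> R -> Prop) : (forall i, sub I' (c i) /\ sub (c i) J') -> forall i, sub I (c i) /\ sub (c i) J.
  move=> h3 i; have [a b] := h3 i.
  by split => x hx; [apply: a; apply: s1 | apply: s2; apply: b].
case: k H => [|k] H c h1 h2 h3; have := H c h1 h2 (B c h3); move=> HH; exact: HH.
Qed.

Lemma dev_triv P k I J : sub J I -> devP P k I J.
Proof.
elim: k I J => [|k IH] I J sJI c h1 h2 h3; exists 0%N => i _.
  by move=> x hx; apply: (proj1 (h3 i.+1)); apply: sJI; apply: (proj2 (h3 i)).
by apply: IH => x hx; apply: (proj1 (h3 i.+1)); apply: sJI; apply: (proj2 (h3 i)).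
Qed.

Lemma dev_transport (P Q : (R -> Prop) -> Prop) (phi : (R -> Prop) -> (R -> Prop)) J0 :
  (forall c d, sub c d -> sub (phi c) (phi d)) ->
  (forall c, Q c -> P (phi c)) ->
  (forall c d, Q c -> Q d -> sub c J0 -> sub d J0 -> sub (phi c) (phi d) -> sub c d) ->
  forall k I J I' J', sub J J0 -> sub I' (phi I) -> sub (phi J) J' ->
    devP P k I' J' -> devP Q k I J.
Proof.
move=> mono PQ refl; elim=> [|k IH] I J I' J' sJ s1 s2 H c h1 h2 h3.
  have [N HN] := H (fun i => phi (c i)) (fun i => PQ _ (h1 i)) (fun i => mono _ _ (h2 i))
     (fun i => conj (fun x hx => mono _ _ (proj1 (h3 i)) x (s1 x hx))
                    (fun x hx => s2 x (mono _ _ (proj2 (h3 i)) x hx))).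
  exists N => i hi; apply: refl; [exact: h1|exact: h1| | |exact: HN].
    by move=> x hx; apply: sJ; apply: (proj2 (h3 i)).
  by move=> x hx; apply: sJ; apply: (proj2 (h3 i.+1)).
have [N HN] := H (fun i => phi (c i)) (fun i => PQ _ (h1 i)) (fun i => mono _ _ (h2 i))
     (fun i => conj (fun x hx => mono _ _ (proj1 (h3 i)) x (s1 x hx))
                    (fun x hx => s2 x (mono _ _ (proj2 (h3 i)) x hx))).
exists N => i hi; apply: (IH _ _ (phi (c i.+1)) (phi (c i))) => //; last exact: HN.
by move=> x hx; apply: sJ; apply: (proj2 (h3 i)).
Qed.

End Dev.


Section Alg.
Variables (F : fieldType) (R : algType F) (n : nat) (u : 'rV[int]_n -> R).
Local Notation V := 'rV[int]_n.

Definition lsum (l : seq (F * V)) : R := \sum_(p <- l) p.1 *: u p.2.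
Definition spanP (X : V -> Prop) x := exists l : seq (F * V), (forall p, p \in l -> X p.2) /\ x = lsum l.

Lemma sum_pred1 (t : seq V) (b : V) (f : V -> R) : uniq t -> b \in t ->
  \sum_(a <- t) (if b == a then f a else 0) = f b.
Proof.
elim: t => [|a t IH] //= /andP[na ut]; rewrite inE big_cons => /orP[/eqP->|bt].
  rewrite eqxx big1_seq ?addr0 // => a' /= a't; case: eqP => // ea; subst a'.
  by rewrite a't in na.
case: eqP => [ea|_]; last by rewrite add0r IH.
by subst a; rewrite bt in na.
Qed.

Lemma lsumL (l : seq (F * V)) (t : seq V) : uniq t -> {subset [seq p.2 | p <- l] <= t} ->
  lsum l = \sum_(b <- t) (\sum_(p <- l | p.2 == b) p.1) *: u b.
Proof.
elim: l => [|p l IH] /= ut st.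
  by rewrite /lsum big_nil; symmetry; apply: big1 => b _; rewrite big_nil scale0r.
rewrite /lsum big_cons -/(lsum l) IH //; last first.
  by move=> b hb; apply: st; rewrite inE hb orbT.
have E b : (\sum_(q <- p :: l | q.2 == b) q.1) *: u b =
   (if p.2 == b then p.1 *: u b else 0) + (\sum_(q <- l | q.2 == b) q.1) *: u b.
  by rewrite big_cons; case: ifP => _; rewrite ?scalerDl ?add0r.
rewrite (eq_bigr _ (fun b _ => E b)) big_split /=; congr (_ + _).
rewrite (sum_pred1 (fun b => p.1 *: u b)) //; apply: st; by rewrite inE eqxx.
Qed.

Lemma lsum_cat l1 l2 : lsum (l1 ++ l2) = lsum l1 + lsum l2.
Proof. by rewrite /lsum big_cat. Qed.

Lemma lsum_scale k l : lsum [seq (k * p.1, p.2) | p <- l] = k *: lsum l.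
Proof. by rewrite /lsum big_map scaler_sumr; apply: eq_bigr => p _; rewrite scalerA. Qed.

Lemma sum_closed (Z : R -> Prop) (I : eqType) (s : seq I) (f : I -> R) :
  Z 0 -> (forall x y, Z x -> Z y -> Z (x + y)) -> (forall i, i \in s -> Z (f i)) ->
  Z (\sum_(i <- s) f i).
Proof.
move=> Z0 ZD; elim: s => [|i s IH] H; first by rewrite big_nil.
rewrite big_cons; apply: ZD; first by apply: H; rewrite inE eqxx.
by apply: IH => j hj; apply: H; rewrite inE hj orbT.
Qed.

Lemma span0 X : spanP X 0.
Proof. by exists [::]; split => //; rewrite /lsum big_nil. Qed.
Lemma spanD X x y : spanP X x -> spanP X y -> spanP X (x + y).
Proof.
move=> [l1 [h1 ->]] [l2 [h2 ->]]; exists (l1 ++ l2); rewrite lsum_cat; split => //.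
by move=> p; rewrite mem_cat => /orP[]; [apply: h1|apply: h2].
Qed.
Lemma spanZ X k x : spanP X x -> spanP X (k *: x).
Proof.
move=> [l [h ->]]; exists [seq (k * p.1, p.2) | p <- l]; rewrite lsum_scale; split => //.
by move=> p /mapP[q hq ->]; exact: (h q hq).
Qed.
Lemma spanU X b : X b -> spanP X (u b).
Proof. by move=> hb; exists [:: (1, b)]; split; [move=> p; rewrite inE => /eqP->|rewrite /lsum big_seq1 scale1r]. Qed.
Lemma span_sum X (I : eqType) (s : seq I) f : (forall i, i \in s -> spanP X (f i)) -> spanP X (\sum_(i <- s) f i).
Proof. move=> H; apply: sum_closed => //; first exact: span0. exact: spanD. Qed.

Lemma spanP_tga X x : spanP X x -> tga_span u X x.
Proof.
move=> [l [h ->]]; exists (undup [seq p.2 | p <- l]), (fun b => \sum_(p <- l | p.2 == b) p.1).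
split; last by apply: lsumL; [apply: undup_uniq| move=> b; rewrite mem_undup].
by move=> a; rewrite mem_undup => /mapP[p hp ->]; apply: h.
Qed.
Lemma tga_spanP X x : tga_span u X x -> spanP X x.
Proof.
move=> [s [c [h ->]]]; exists [seq (c a, a) | a <- s]; split.
  by move=> p /mapP[a ha ->]; exact: (h a ha).
by rewrite /lsum big_map.
Qed.

End Alg.


Section Main.
Variables (F : fieldType) (R : algType F) (n : nat) (u : 'rV[int]_n -> R)
  (tau : 'rV[int]_n -> 'rV[int]_n -> F) (A' : 'rV[int]_n -> Prop).
Local Notation V := 'rV[int]_n.
Hypothesis Htga : twisted_group_algebra u tau.
Hypothesis HA : is_subgroup A'.

Lemma Htau0 a b : tau a b != 0. Proof. by case: Htga. Qed.
Lemma Hcoc a b c : tau a b * tau (a + b) c = tau a (b + c) * tau b c. Proof. by case: Htga. Qed.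
Lemma Hind : forall (s : seq V) (c : V -> F), uniq s ->
      \sum_(a <- s) c a *: u a = 0 -> forall a, a \in s -> c a = 0.
Proof. by case: Htga => _ _ []. Qed.
Lemma Hspan x : tga_span u (fun _ => True) x. Proof. by case: Htga => _ _ []. Qed.
Lemma Hmul a b : u a * u b = tau a b *: u (a + b). Proof. by case: Htga. Qed.

Lemma span_all x : exists l, x = lsum u l.
Proof. by have [l [_ ->]] := tga_spanP (Hspan x); exists l. Qed.

Lemma tau_r0 b : tau b 0 = tau 0 0.
Proof. by have := Hcoc b 0 0; rewrite !addr0 => /(mulfI (Htau0 b 0)). Qed.

Lemma lmulR l a : lsum u l * u a = lsum u [seq (p.1 * tau p.2 a, p.2 + a) | p <- l].
Proof.
rewrite /lsum big_map mulr_suml; apply: eq_bigr => p _.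
by rewrite -scalerAl Hmul scalerA.
Qed.
Lemma lmulL l a : u a * lsum u l = lsum u [seq (p.1 * tau a p.2, a + p.2) | p <- l].
Proof.
rewrite /lsum big_map mulr_sumr; apply: eq_bigr => p _.
by rewrite -scalerAr Hmul scalerA.
Qed.

Lemma mulu0 x : x * u 0 = tau 0 0 *: x.
Proof.
have [l ->] := span_all x; rewrite lmulR /lsum big_map scaler_sumr.
by apply: eq_bigr => p _ /=; rewrite addr0 tau_r0 scalerA mulrC.
Qed.

Lemma A0 : A' 0. Proof. by case: HA. Qed.
Lemma Asub a b : A' a -> A' b -> A' (a - b). Proof. by case: HA => _; apply. Qed.
Lemma Aopp a : A' a -> A' (- a). Proof. by move=> h; rewrite -sub0r; apply: Asub => //; exact: A0. Qed.
Lemma Aadd a b : A' a -> A' b -> A' (a + b).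
Proof. by move=> ha hb; rewrite -(opprK b); apply: Asub => //; apply: Aopp. Qed.

Definition Tset := tga_span u A'.

Lemma spanL X l : (forall p, p \in l -> X p.2) -> spanP u X (lsum u l).
Proof. by move=> h; exists l. Qed.

Lemma Tmul x y : Tset x -> Tset y -> Tset (x * y).
Proof.
move=> /tga_spanP [l1 [h1 ->]] /tga_spanP [l2 [h2 ->]]; apply: spanP_tga.
rewrite {1}/lsum mulr_suml; apply: span_sum => p hp.
rewrite -scalerAl lmulL; apply: spanZ; apply: spanL => q /mapP [q' hq' ->] /=.
by apply: Aadd; [apply: h1|apply: h2].
Qed.
Lemma T0 : Tset 0. Proof. exact: spanP_tga (span0 _ _). Qed.
Lemma TD x y : Tset x -> Tset y -> Tset (x + y).
Proof. by move=> /tga_spanP h1 /tga_spanP h2; apply: spanP_tga; apply: spanD. Qed.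
Lemma TZ k x : Tset x -> Tset (k *: x).
Proof. by move=> /tga_spanP h1; apply: spanP_tga; apply: spanZ. Qed.
Lemma TU a : A' a -> Tset (u a).
Proof. by move=> h; apply: spanP_tga; apply: spanU. Qed.

Definition Tmod (X : R -> Prop) :=
  [/\ X 0, forall x y, X x -> X y -> X (x + y) & forall x t, X x -> Tset t -> X (x * t)].

Lemma Tmod_scale X k x : Tmod X -> X x -> X (k *: x).
Proof.
move=> [_ _ hM] hx.
have -> : k *: x = x * ((k / tau 0 0) *: u 0).
  by rewrite -scalerAr mulu0 scalerA divfK // Htau0.
by apply: hM => //; apply: TZ; apply: TU; apply: A0.
Qed.
Lemma Tmod_sub X x y : Tmod X -> X x -> X y -> X (x - y).
Proof.
move=> hX hx hy; have [_ hD _] := hX; apply: hD => //.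
by rewrite -scaleN1r; apply: Tmod_scale.
Qed.
Lemma rideal_Tmod X : is_rideal Tset X -> Tmod X.
Proof. by case. Qed.

Definition meet (X Y : R -> Prop) := fun z => X z /\ Y z.
Definition join (X Y : R -> Prop) := fun z => exists x y, [/\ X x, Y y & z = x + y].

Lemma Tmod_meet X Y : Tmod X -> Tmod Y -> Tmod (meet X Y).
Proof.
move=> [a b c] [a' b' c']; split; first by split.
  by move=> x y [? ?] [? ?]; split; auto.
by move=> x t [? ?] ?; split; auto.
Qed.
Lemma Tmod_join X Y : Tmod X -> Tmod Y -> Tmod (join X Y).
Proof.
move=> [a b c] [a' b' c']; split.
- by exists 0, 0; split => //; rewrite addr0.
- move=> _ _ [x1 [y1 [h1 h2 ->]]] [x2 [y2 [h3 h4 ->]]]; exists (x1 + x2), (y1 + y2).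
  by split; auto; rewrite addrACA.
- move=> _ t [x1 [y1 [h1 h2 ->]]] ht; exists (x1 * t), (y1 * t); split; auto.
  by rewrite mulrDl.
Qed.

Lemma dev_modular k a b x : Tmod x ->
  devP Tmod k (meet a x) (meet b x) -> devP Tmod k (join a x) (join b x) -> devP Tmod k a b.
Proof.
have x0 : forall x, Tmod x -> x 0 by move=> ? [].
elim: k a b => [|k IH] a b Hx H1 H2 c Hc Hdec Hbd.
  have [N1 h1] := H1 (fun i => meet (c i) x) (fun i => Tmod_meet (Hc i) Hx)
    (fun i z hz => conj (Hdec i z (proj1 hz)) (proj2 hz))
    (fun i => conj (fun z hz => conj (proj1 (Hbd i) z (proj1 hz)) (proj2 hz))
                   (fun z hz => conj (proj2 (Hbd i) z (proj1 hz)) (proj2 hz))).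
  have [N2 h2] := H2 (fun i => join (c i) x) (fun i => Tmod_join (Hc i) Hx)
    (fun i z '(ex_intro x1 (ex_intro y1 (And3 p1 p2 p3))) =>
        ex_intro _ x1 (ex_intro _ y1 (And3 (Hdec i x1 p1) p2 p3)))
    (fun i => conj (fun z '(ex_intro x1 (ex_intro y1 (And3 p1 p2 p3))) =>
                      ex_intro _ x1 (ex_intro _ y1 (And3 (proj1 (Hbd i) x1 p1) p2 p3)))
                   (fun z '(ex_intro x1 (ex_intro y1 (And3 p1 p2 p3))) =>
                      ex_intro _ x1 (ex_intro _ y1 (And3 (proj2 (Hbd i) x1 p1) p2 p3)))).
  exists (maxn N1 N2) => i hi.
  have e1 := h1 i (leq_trans (leq_maxl _ _) hi).
  have e2 := h2 i (leq_trans (leq_maxr _ _) hi).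
  move=> y hy.
  have [z [w [hz hw eyzw]]] : join (c i.+1) x y.
    by apply: e2; exists y, 0; split => //; [exact: x0 | rewrite addr0].
  have hwc : c i w.
    have -> : w = y - z by rewrite eyzw addrC addKr.
    by apply: Tmod_sub => //; apply: Hdec.
  have [hw' _] := e1 w (conj hwc hw).
  by rewrite eyzw; case: (Hc i.+1) => _ hD _; apply: hD.
have [N1 h1] := H1 (fun i => meet (c i) x) (fun i => Tmod_meet (Hc i) Hx)
    (fun i z hz => conj (Hdec i z (proj1 hz)) (proj2 hz))
    (fun i => conj (fun z hz => conj (proj1 (Hbd i) z (proj1 hz)) (proj2 hz))
                   (fun z hz => conj (proj2 (Hbd i) z (proj1 hz)) (proj2 hz))).
have [N2 h2] := H2 (fun i => join (c i) x) (fun i => Tmod_join (Hc i) Hx)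
    (fun i z '(ex_intro x1 (ex_intro y1 (And3 p1 p2 p3))) =>
        ex_intro _ x1 (ex_intro _ y1 (And3 (Hdec i x1 p1) p2 p3)))
    (fun i => conj (fun z '(ex_intro x1 (ex_intro y1 (And3 p1 p2 p3))) =>
                      ex_intro _ x1 (ex_intro _ y1 (And3 (proj1 (Hbd i) x1 p1) p2 p3)))
                   (fun z '(ex_intro x1 (ex_intro y1 (And3 p1 p2 p3))) =>
                      ex_intro _ x1 (ex_intro _ y1 (And3 (proj2 (Hbd i) x1 p1) p2 p3)))).
exists (maxn N1 N2) => i hi.
apply: IH => //; [exact: (h1 i (leq_trans (leq_maxl _ _) hi)) |
                  exact: (h2 i (leq_trans (leq_maxr _ _) hi))].
Qed.

Definition zero : R -> Prop := fun x => x = 0.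
Definition uT r : R -> Prop := fun z => exists t, Tset t /\ z = u r * t.
Fixpoint Mset (s : seq V) : R -> Prop :=
  if s is r :: s' then join (uT r) (Mset s') else zero.

Lemma Tmod_uT r : Tmod (uT r).
Proof.
split.
- by exists 0; split; [exact: T0 | rewrite mulr0].
- by move=> _ _ [t1 [h1 ->]] [t2 [h2 ->]]; exists (t1 + t2); split; [apply: TD|rewrite mulrDr].
- by move=> _ t [t1 [h1 ->]] ht; exists (t1 * t); split; [apply: Tmul|rewrite mulrA].
Qed.
Lemma Tmod_zero : Tmod zero.
Proof. rewrite /zero; split => //; [by move=> x y -> ->; rewrite addr0|by move=> x t -> _; rewrite mul0r]. Qed.
Lemma Tmod_M s : Tmod (Mset s).
Proof. elim: s => [|r s IH] /=; [exact: Tmod_zero | exact: Tmod_join (Tmod_uT r) IH]. Qed.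

Lemma devM k s : (forall r, devP Tmod k zero (uT r)) -> devP Tmod k zero (Mset s).
Proof.
move=> Hr; elim: s => [|r s IH] /=; first by apply: dev_triv.
have hM := Tmod_M s; have [M0 MD _] := hM; have hU := Tmod_uT r; have [U0 UD _] := hU.
have D : devP Tmod k (Mset s) (join (uT r) (Mset s)).
  apply: (dev_modular (x := uT r)) => //.
    apply: (dev_sub (Hr r)); first by move=> z ->; split.
    by move=> z [].
  apply: dev_triv => _ [_ [x2 [[x1 [y1 [h1 h2 ->]]] h3 ->]]].
  exists y1, (x1 + x2); split => //; first by apply: UD.
  by rewrite addrAC addrC.
apply: (dev_modular (x := Mset s)) => //.
  apply: (dev_sub IH); first by move=> z ->; split.
  by move=> z [].
apply: (dev_sub D); first by move=> z hz; exists 0, z; split => //; rewrite add0r.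
move=> _ [_ [y [[x1 [y1 [h1 h2 ->]]] h3 ->]]].
exists x1, (y1 + y); split => //; first by apply: MD.
by rewrite addrA.
Qed.

Lemma M_mem r s : r \in s -> forall z, uT r z -> Mset s z.
Proof.
elim: s => [|r' s IH] //; rewrite inE => /orP[/eqP <-|hr] z hz /=.
  by exists z, 0; split => //; [case: (Tmod_M s) | rewrite addr0].
exists 0, z; split => //; first by case: (Tmod_uT r').
  by apply: IH.
by rewrite add0r.
Qed.

Lemma dir2 k : finite_index A' ->
  devP (is_rideal Tset) k zero Tset -> devP (is_rideal (tga_span u (fun _ => True))) k zero (tga_span u (fun _ => True)).
Proof.
move=> [s hs] HT.
have Hr r : devP Tmod k zero (uT r).
  pose phi (c : R -> Prop) := fun t => Tset t /\ c (u r * t).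
  apply: (@dev_transport _ (is_rideal Tset) Tmod phi (uT r) _ _ _ k zero (uT r) zero Tset) => //.
  - by move=> c d h t [h1 h2]; split => //; apply: h.
  - move=> c [c0 cD cM]; split.
    + by move=> t [].
    + by split; [exact: T0 | rewrite mulr0].
    + by move=> x y [hx1 hx2] [hy1 hy2]; split; [apply: TD|rewrite mulrDr; apply: cD].
    + by move=> x y [hx1 hx2] hy; split; [apply: Tmul|rewrite mulrA; apply: cM].
  - move=> c d _ _ sc _ h z hz; have [t [ht ez]] := sc z hz.
    by subst z; have [] := h t (conj ht hz).
  - by move=> z ->; split; [exact: T0 | rewrite mulr0].
  - by move=> t [].
have HM := devM s Hr.
have sub_all : sub (tga_span u (fun _ => True)) (Mset s).
  move=> z _; have [l ->] := span_all z; have [M0 MD _] := Tmod_M s.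
  rewrite /lsum; apply: sum_closed => // p _.
  apply: Tmod_scale; first exact: Tmod_M.
  have [r hr hA] := hs p.2; apply: (M_mem hr).
  exists ((tau r (p.2 - r))^-1 *: u (p.2 - r)); split; first by apply: TZ; apply: TU.
  by rewrite -scalerAr Hmul scalerA mulVf ?Htau0 // scale1r addrC subrK.
have HM' := dev_sub HM (fun z h => h) sub_all.
apply: (@dev_transport _ Tmod (is_rideal (tga_span u (fun _ => True))) id (tga_span u (fun _ => True))
  _ _ _ k zero (tga_span u (fun _ => True)) zero (tga_span u (fun _ => True))) => //.
move=> c [_ c0 cD cM]; split => // x t hx _; apply: cM => //; exact: Hspan.
Qed.

Definition pb (b : V) : bool := if excluded_middle_informative (A' b) then true else false.
Lemma pbP b : pb b <-> A' b.
Proof. by rewrite /pb; case: excluded_middle_informative. Qed.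

Definition lproj (l : seq (F * V)) := lsum u [seq (if pb p.2 then p.1 else 0, p.2) | p <- l].

Lemma proj_wd l l' : lsum u l = lsum u l' -> lproj l = lproj l'.
Proof.
move=> H.
set t := undup [seq p.2 | p <- l ++ l'].
have ut : uniq t := undup_uniq _.
have s1 : {subset [seq p.2 | p <- l] <= t}.
  by move=> b hb; rewrite mem_undup map_cat mem_cat hb.
have s2 : {subset [seq p.2 | p <- l'] <= t}.
  by move=> b hb; rewrite mem_undup map_cat mem_cat hb orbT.
pose G (l0 : seq (F * V)) b := \sum_(p <- l0 | p.2 == b) p.1.
have eqG b : b \in t -> G l b = G l' b.
  move=> hb; move: H; rewrite (lsumL u ut s1) (lsumL u ut s2) => H.
  have H0 : \sum_(b <- t) (G l b - G l' b) *: u b = 0.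
    rewrite (eq_bigr (fun b => G l b *: u b - G l' b *: u b)); last by move=> ? _; rewrite scalerBl.
    by rewrite sumrB H subrr.
  by have /eqP := Hind ut H0 hb; rewrite subr_eq0 => /eqP.
have projL l0 : {subset [seq p.2 | p <- l0] <= t} ->
    lproj l0 = \sum_(b <- t) (if pb b then G l0 b else 0) *: u b.
  move=> s0; rewrite /lproj (lsumL u ut); last by rewrite -map_comp.
  apply: eq_bigr => b _; congr (_ *: _); rewrite big_map /=.
  case hb: (pb b).
    by apply: eq_bigr => p /eqP ->; rewrite hb.
  by rewrite big1 // => p /eqP ->; rewrite hb.
rewrite (projL l s1) (projL l' s2); apply: eq_big_seq => b hb.
by rewrite eqG.
Qed.

Definition rep (x : R) : seq (F * V) :=
  proj1_sig (constructive_indefinite_description _ (span_all x)).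
Lemma repE x : x = lsum u (rep x).
Proof. rewrite /rep; by case: constructive_indefinite_description. Qed.

Definition pi x := lproj (rep x).
Lemma pi_lsum l : pi (lsum u l) = lproj l.
Proof. by apply: proj_wd; rewrite -repE. Qed.
Lemma lproj_cat l1 l2 : lproj (l1 ++ l2) = lproj l1 + lproj l2.
Proof. by rewrite /lproj map_cat lsum_cat. Qed.
Lemma piD x y : pi (x + y) = pi x + pi y.
Proof. by rewrite {1}(repE x) {1}(repE y) -lsum_cat pi_lsum lproj_cat. Qed.
Lemma piZ k x : pi (k *: x) = k *: pi x.
Proof.
rewrite {1}(repE x) -lsum_scale pi_lsum /pi /lproj -lsum_scale -!map_comp.
by congr lsum; apply: eq_map => p /=; case: (pb p.2); rewrite ?mulr0.
Qed.
Lemma pi0 : pi 0 = 0.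
Proof. have h := pi_lsum [::]; rewrite /lproj /lsum /= !big_nil in h; exact h. Qed.

Lemma lproj_all l : (forall p, p \in l -> A' p.2) -> lproj l = lsum u l.
Proof.
move=> h; rewrite /lproj /lsum big_map; apply: eq_big_seq => p hp /=.
by have /pbP -> := h p hp.
Qed.
Lemma lproj_none l : (forall p, p \in l -> ~ A' p.2) -> lproj l = 0.
Proof.
move=> h; rewrite /lproj /lsum big_map big1_seq // => p /andP[_ hp] /=.
case hb: (pb p.2); last by rewrite scale0r.
by exfalso; apply: (h p hp); apply/pbP; rewrite hb.
Qed.

Lemma pi_T y : Tset y -> pi y = y.
Proof. by move=> /tga_spanP [l [h ->]]; rewrite pi_lsum lproj_all. Qed.

Lemma rideal_scale X k x : is_rideal Tset X -> X x -> X (k *: x).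
Proof. by move=> /rideal_Tmod; apply: Tmod_scale. Qed.

Lemma dir1 k :
  devP (is_rideal (tga_span u (fun _ => True))) k zero (tga_span u (fun _ => True)) ->
  devP (is_rideal Tset) k zero Tset.
Proof.
move=> HS.
pose phi (c : R -> Prop) := fun x => forall a, c (pi (x * u a)).
apply: (@dev_transport _ (is_rideal (tga_span u (fun _ => True))) (is_rideal Tset) phi Tset
  _ _ _ k zero Tset zero (tga_span u (fun _ => True))) => //.
- by move=> c d h x hx a; apply: h.
- move=> c hc; have [_ c0 cD cM] := hc; split.
  + by move=> x _; exact: Hspan.
  + by move=> a; rewrite mul0r pi0.
  + by move=> x y hx hy a; rewrite mulrDl piD; apply: cD.
  + move=> x y hx _ a; have [l ->] := span_all y.
    rewrite /lsum mulr_sumr mulr_suml.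
    have -> : forall (s : seq (F * V)) f, pi (\sum_(p <- s) f p) = \sum_(p <- s) pi (f p).
      move=> s f; elim: s => [|p s IH]; first by rewrite !big_nil pi0.
      by rewrite !big_cons piD IH.
    apply: sum_closed => // p _.
    rewrite -scalerAr -scalerAl -mulrA Hmul -scalerAr !piZ.
    by apply: (rideal_scale _ hc); apply: (rideal_scale _ hc); apply: hx.
- move=> c d [sc c0 cD cM] hd _ _ h x hx.
  have hphi : phi c x.
    move=> a; have := sc x hx => /tga_spanP [l [hl ex]].
    rewrite ex lmulR pi_lsum.
    case: (excluded_middle_informative (A' a)) => ha.
      rewrite lproj_all; last by move=> p /mapP [q hq ->] /=; apply: Aadd => //; apply: hl.
      by rewrite -lmulR -ex; apply: cM => //; apply: TU.
    rewrite lproj_none // => p /mapP [q hq ->] /= hqa; apply: ha.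
    by have := Asub hqa (hl q hq); rewrite addrC addKr.
  have := h x hphi 0; rewrite pi_T; last by apply: Tmul; [apply: sc|apply: TU; apply: A0].
  rewrite mulu0 => hd0.
  have := rideal_scale (tau 0 0)^-1 hd hd0; rewrite scalerA mulVf ?Htau0 // scale1r.
  done.
- by move=> z -> a; rewrite mul0r pi0.
- by move=> z _; exact: Hspan.
Qed.

End Main.

Theorem corollary5p2 (F : fieldType) (R : algType F) (n : nat)
    (u : 'rV[int]_n -> R) (tau : 'rV[int]_n -> 'rV[int]_n -> F)
    (A' : 'rV[int]_n -> Prop) :
  twisted_group_algebra u tau ->
  is_subgroup A' -> finite_index A' ->
  forall k : nat,
    rKdim_le (tga_span u A') k <-> rKdim_le (tga_span u (fun _ => True)) k.
Proof.
move=> Ht HA Hfi k; rewrite /rKdim_le !dev_leE; split => H.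
  exact: (dir2 Ht HA Hfi H).
exact: (dir1 Ht HA H).
Qed.
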